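(* Let $\varphi$ be a Boolean formula in 3-CNF with $m$ clauses and $n$ variables, and let $G$ be the graph constructed from $\varphi$ as described in the context, with $k = 14m+3n$. Then $\varphi$ is satisfiable if and only if $\mathrm{vc}(G)\le k$.
   Context: Let $\varphi$ consist of clauses $C_1,\dots,C_m$ over variables $x_1,\dots,x_n$, each clause containing exactly three literals, $C_i=(L_i^1\vee L_i^2\vee L_i^3)$. The graph $G$ has vertex set $\{u_{r,s,i}: r\in\{1,2,3\}, s\in\{1,\dots,7\}, i\in\{1,\dots,m\}\}\cup\{v_{r,s,j}: r\in\{1,2\}, s\in\{1,2,3\}, j\in\{1,\dots,n\}\}$ and edge set consisting of: $\{u_{r,s,i},u_{r',s',i}\}$ for all $r\ne r'$ in $\{1,2,3\}$, all $s,s'\in\{1,\dots,7\}$, all $i$; $\{v_{1,s,j},v_{2,s',j}\}$ for all $s,s'\in\{1,2,3\}$, all $j$; $\{u_{r,s,i},v_{1,s',j}\}$ for all $s\in\{1,\dots,7\}$, $s'\in\{1,2,3\}$ whenever $L_i^r = x_j$; and $\{u_{r,s,i},v_{2,s',j}\}$ for all $s\in\{1,\dots,7\}$, $s'\in\{1,2,3\}$ whenever $L_i^r=\neg x_j$. $\mathrm{vc}(G)$ is the minimum size of a vertex cover of $G$ (a set of vertices containing at least one endpoint of every edge). *)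

(* Defs.v *)
From mathcomp Require Import all_boot.
Set Implicit Arguments. Unset Strict Implicit. Unset Printing Implicit Defensive.

(* A literal over variables x_0..x_{n-1}: (j, true) is x_j, (j, false) is ~x_j. *)
Definition literal (n : nat) := ('I_n * bool)%type.

(* A 3-CNF formula with m clauses over n variables:
   phi i r is the literal L_i^r (r : 'I_3). *)
Definition cnf3 (m n : nat) := 'I_m -> 'I_3 -> literal n.

Definition lit_true n (a : 'I_n -> bool) (L : literal n) : bool :=
  a L.1 == L.2.

Definition satisfiable m n (phi : cnf3 m n) : Prop :=
  exists a : 'I_n -> bool, forall i : 'I_m, exists r : 'I_3, lit_true a (phi i r).

(* Vertices: inl (r, s, i) is u_{r,s,i}; inr (r, s, j) is v_{r,s,j}
   (indices shifted to start at 0). *)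
Definition vertex (m n : nat) : finType :=
  (('I_3 * 'I_7 * 'I_m) + ('I_2 * 'I_3 * 'I_n))%type.

Definition adj0 m n (phi : cnf3 m n) (x y : vertex m n) : bool :=
  match x, y with
  | inl (r, _, i), inl (r', _, i') => (i == i') && (r != r')
  | inr (t, _, j), inr (t', _, j') =>
      (j == j') && (val t == 0) && (val t' == 1)
  | inl (r, _, i), inr (t, _, j) =>
      ((phi i r).1 == j) &&
      (((phi i r).2 && (val t == 0)) || (~~ (phi i r).2 && (val t == 1)))
  | _, _ => false
  end.

Definition adj m n (phi : cnf3 m n) (x y : vertex m n) : bool :=
  adj0 phi x y || adj0 phi y x.

Definition is_vertex_cover (T : finType) (e : rel T) (S : {set T}) : bool :=
  [forall x, forall y, e x y ==> (x \in S) || (y \in S)].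

(* Minimum size of a vertex cover (the full vertex set is always a cover). *)
Definition vc (T : finType) (e : rel T) : nat :=
  \big[minn/#|T|]_(S : {set T} | is_vertex_cover e S) #|S|.

(* Main.v *)
Require Import Defs.
From mathcomp Require Import all_boot zify.

Lemma sum_full k (f : 'I_k -> bool) : (forall s, f s) -> \sum_(s < k) (f s : nat) = k.
Proof.
move=> H; rewrite (eq_bigr (fun _ => 1)); last by move=> s _; rewrite H.
by rewrite sum1_card card_ord.
Qed.

Lemma sum_le k (f : 'I_k -> bool) : \sum_(s < k) (f s : nat) <= k.
Proof.
apply: (@leq_trans (\sum_(s < k) 1)); last by rewrite sum1_card card_ord.
apply: leq_sum => s _; by case: (f s).
Qed.

Lemma sum_ge1 k (f : 'I_k -> bool) s0 : f s0 -> 1 <= \sum_(s < k) (f s : nat).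
Proof. by move=> H; rewrite (bigD1 s0) //= H. Qed.

Lemma sum_notfull k (f : 'I_k -> bool) : \sum_(s < k) (f s : nat) != k -> exists s, ~~ f s.
Proof.
case: (boolP [exists s, ~~ f s]) => [/existsP//|H].
rewrite sum_full ?eqxx // => s; apply/negPn; move/existsPn: H; apply.
Qed.

Lemma sum_lower k c (F : 'I_k -> nat) : (forall i, c <= F i) -> c * k <= \sum_(i < k) F i.
Proof.
move=> H; have -> : c * k = \sum_(i < k) c by rewrite sum_nat_const card_ord mulnC.
exact: leq_sum.
Qed.

Lemma sum_strict k c (F : 'I_k -> nat) i0 : (forall i, c <= F i) -> c < F i0 ->
  c * k < \sum_(i < k) F i.
Proof.
move=> H H0; have -> : c * k = \sum_(i < k) c by rewrite sum_nat_const card_ord mulnC.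
rewrite (bigD1 i0) //= [X in _ < X](bigD1 i0) //= -addSn.
apply: leq_add => //; exact: leq_sum.
Qed.

Lemma bigmin_le_seq (I : eqType) (r : seq I) x0 (P : pred I) (F : I -> nat) x :
  x \in r -> P x -> \big[minn/x0]_(y <- r | P y) F y <= F x.
Proof.
elim: r => // y r IH; rewrite in_cons big_cons => /orP[/eqP <- Px|Hr Px].
  by rewrite Px geq_minl.
case: (P y); last exact: IH.
by rewrite geq_min IH ?orbT.
Qed.

Lemma vc_le (T : finType) (e : rel T) S : is_vertex_cover e S -> vc e <= #|S|.
Proof. by move=> H; rewrite /vc; apply: bigmin_le_seq => //; rewrite mem_index_enum. Qed.

Lemma vc_attained (T : finType) (e : rel T) k : vc e <= k ->
  exists2 S, is_vertex_cover e S & #|S| <= k.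
Proof.
move=> H; case: (boolP [exists S, is_vertex_cover e S && (#|S| <= k)]).
  by case/existsP => S /andP[H1 H2]; exists S.
move/existsPn => Hn; exfalso.
have : k < vc e.
  rewrite /vc; apply: (big_ind (fun x => k < x)).
  - have HT : is_vertex_cover e setT.
      by apply/forallP => x; apply/forallP => y; rewrite in_setT implybT.
    by have := Hn setT; rewrite HT cardsT /= ltnNge.
  - by move=> x y; rewrite leq_min => -> ->.
  - by move=> S HS; have := Hn S; rewrite HS /= ltnNge.
by rewrite ltnNge H.
Qed.

Section S.
Variables (m n : nat) (phi : cnf3 m n).
Implicit Types S : {set vertex m n}.

Definition cl S (i : 'I_m) (r : 'I_3) : nat :=
  \sum_(s < 7) ((inl (r, s, i) : vertex m n) \in S).
Definition vr S (j : 'I_n) (t : 'I_2) : nat :=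
  \sum_(s < 3) ((inr (t, s, j) : vertex m n) \in S).

Lemma sum3 (A B C : finType) (F : A -> B -> C -> nat) :
  \sum_(c : C) \sum_(a : A) \sum_(b : B) F a b c = \sum_(x : A * B * C) F x.1.1 x.1.2 x.2.
Proof.
rewrite exchange_big /=.
under eq_bigr do rewrite exchange_big /=.
rewrite pair_big /= pair_big /=.
by apply: eq_bigr.
Qed.

Lemma card_decomp S :
  #|S| = \sum_(i < m) \sum_(r < 3) cl S i r + \sum_(j < n) \sum_(t < 2) vr S j t.
Proof.
rewrite -sum1_card big_mkcond /= big_sumType /=.
congr (_ + _).
- rewrite /cl sum3; apply: eq_bigr => [[[r s] i]] _ /=; by case: (_ \in S).
- rewrite /vr sum3; apply: eq_bigr => [[[r s] i]] _ /=; by case: (_ \in S).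
Qed.
Lemma cov_use S x y : is_vertex_cover (@adj m n phi) S -> adj phi x y -> (x \in S) || (y \in S).
Proof. by move=> /forallP /(_ x) /forallP /(_ y) /implyP. Qed.

Lemma cl_pair S i r r' : is_vertex_cover (@adj m n phi) S -> r != r' ->
  cl S i r = 7 \/ cl S i r' = 7.
Proof.
move=> Hc Hr.
case: (eqVneq (cl S i r) 7) => [|/sum_notfull [s Hs]]; first by left.
case: (eqVneq (cl S i r') 7) => [|/sum_notfull [s' Hs']]; first by right.
exfalso; have := @cov_use S (inl (r, s, i)) (inl (r', s', i)) Hc.
by rewrite (negbTE Hs) (negbTE Hs') /adj /= eqxx Hr => /(_ isT).
Qed.

Lemma vr_pair S j : is_vertex_cover (@adj m n phi) S ->
  vr S j ord0 = 3 \/ vr S j (lift ord0 ord0) = 3.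
Proof.
move=> Hc.
case: (eqVneq (vr S j ord0) 3) => [|/sum_notfull [s Hs]]; first by left.
case: (eqVneq (vr S j (lift ord0 ord0)) 3) => [|/sum_notfull [s' Hs']]; first by right.
exfalso; have := @cov_use S (inr (ord0, s, j)) (inr (lift ord0 ord0, s', j)) Hc.
by rewrite (negbTE Hs) (negbTE Hs') /adj /= eqxx => /(_ isT).
Qed.

Lemma cl_ge S i : is_vertex_cover (@adj m n phi) S -> 14 <= \sum_(r < 3) cl S i r.
Proof.
move=> Hc; rewrite !big_ord_recl big_ord0.
have := @cl_pair S i (ord0) (lift ord0 ord0) Hc isT.
have := @cl_pair S i (ord0) (lift ord0 (lift ord0 ord0)) Hc isT.
have := @cl_pair S i (lift ord0 ord0) (lift ord0 (lift ord0 ord0)) Hc isT.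
lia.
Qed.

Lemma vr_ge S j : is_vertex_cover (@adj m n phi) S -> 3 <= \sum_(t < 2) vr S j t.
Proof.
move=> Hc; rewrite !big_ord_recl big_ord0.
have := @vr_pair S j Hc. lia.
Qed.


Lemma sum_upper k c (F : 'I_k -> nat) : (forall i, F i <= c) -> \sum_(i < k) F i <= c * k.
Proof.
move=> H; have -> : c * k = \sum_(i < k) c by rewrite sum_nat_const card_ord mulnC.
exact: leq_sum.
Qed.

Lemma forward (a : 'I_n -> bool) :
  (forall i, exists r, lit_true a (phi i r)) -> vc (adj phi) <= 14 * m + 3 * n.
Proof.
move=> H.
pose ri i := odflt ord0 [pick r | lit_true a (phi i r)].
have Hri : forall i, lit_true a (phi i (ri i)).
  move=> i; rewrite /ri; case: pickP => //= H0; have [r Hr] := H i; by rewrite H0 in Hr.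
pose S := [set x : vertex m n | match x with
   | inl (r, _, i) => r != ri i | inr (t, _, j) => (val t == 0) == a j end].
have Hc : is_vertex_cover (adj phi) S.
  have H0 : forall x y, adj0 phi x y -> (x \in S) || (y \in S).
    move=> [[[r s] i]|[[t s] j]] [[[r' s'] i']|[[t' s'] j']] /=; rewrite !inE.
    - case/andP => /eqP <- Hrr; case: (eqVneq r (ri i)) => [Er|] //=.
      by rewrite -Er eq_sym.
    - case: (eqVneq r (ri i)) => //= Er; move: (Hri i); rewrite -Er /lit_true.
      case: (phi i r) => jj b /= /eqP Ha /andP[/eqP Hj]; subst jj; rewrite Ha.
      by case: b {Ha}; case: t' => [[|[|k]] Ht].
    - by [].
    - move=> /andP[/andP[/eqP <- Ht] Ht']; rewrite Ht.
      by move: Ht'; case: t' => [[|[|k]] ?] //=; case: (a j).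
  apply/forallP => x; apply/forallP => y; apply/implyP; rewrite /adj.
  by case/orP => [/H0 //| /H0]; rewrite orbC.
apply: (leq_trans (@vc_le _ _ S Hc)).
rewrite card_decomp; apply: leq_add; apply: sum_upper.
- move=> i.
  have Hcl : forall r, cl S i r = 7 * (r != ri i).
    move=> r; rewrite /cl (eq_bigr (fun _ => (r != ri i) : nat)) ?sum_nat_const ?card_ord //.
    by move=> s _; rewrite inE.
  rewrite !big_ord_recl big_ord0 !Hcl.
  by case: (ri i) => [[|[|[|k]]] Hk].
- move=> j.
  have Hvr : forall t, vr S j t = 3 * ((val t == 0) == a j).
    move=> t; rewrite /vr (eq_bigr (fun _ => ((val t == 0) == a j) : nat)) ?sum_nat_const ?card_ord //.
    by move=> s _; rewrite inE.
  rewrite !big_ord_recl big_ord0 !Hvr /=.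
  by case: (a j).
Qed.

Lemma backward : vc (adj phi) <= 14 * m + 3 * n -> satisfiable phi.
Proof.
move=> /vc_attained [S Hc HS].
pose a j := (inr (ord0, ord0, j) : vertex m n) \in S.
case: (boolP [forall i, [exists r, lit_true a (phi i r)]]) => [/forallP Hall|].
  by exists a => i; have /existsP := Hall i.
move/forallPn => [i0 /existsPn Hn]; exfalso.
have key : forall r, cl S i0 r = 7 \/ exists j, 4 <= \sum_(t < 2) vr S j t.
  move=> r; have := Hn r; rewrite /lit_true.
  case E: (phi i0 r) => [j b] /= Hab.
  case: b E Hab => E Hab.
  - rewrite eqb_id in Hab.
    left; apply: sum_full => s.
    have := @cov_use S (inl (r, s, i0)) (inr (ord0, ord0, j)) Hc.
    rewrite /adj /= E /= eqxx /= => /(_ isT).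
    by move: Hab; rewrite /a => /negbTE ->; rewrite orbF.
  - rewrite eqbF_neg negbK in Hab.
    case: (eqVneq (vr S j (lift ord0 ord0)) 3) => [E3|/sum_notfull [s' Hs']].
      right; exists j; rewrite !big_ord_recl big_ord0.
      have : 1 <= vr S j ord0 by apply: (@sum_ge1 _ _ ord0).
      rewrite E3; lia.
    left; apply: sum_full => s.
    have := @cov_use S (inl (r, s, i0)) (inr (lift ord0 ord0, s', j)) Hc.
    rewrite /adj /= E /= eqxx /= => /(_ isT).
    by rewrite (negbTE Hs') orbF.
rewrite card_decomp in HS.
have Hc1 : forall i, 14 <= \sum_(r < 3) cl S i r by move=> i; apply: cl_ge.
have Hv : forall j, 3 <= \sum_(t < 2) vr S j t by move=> j; apply: vr_ge.
have L1 := @sum_lower _ _ _ Hc1; have L2 := @sum_lower _ _ _ Hv.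
case: (boolP [forall r, cl S i0 r == 7]) => [/forallP Hf|/forallPn [r Hr]].
  have Hlt : 14 < \sum_(r < 3) cl S i0 r.
    by rewrite !big_ord_recl big_ord0 !(eqP (Hf _)).
  have := @sum_strict _ _ _ _ Hc1 Hlt; lia.
case: (key r) => [/eqP|[j Hj]]; first by rewrite (negbTE Hr).
have := @sum_strict _ _ _ _ Hv Hj; lia.
Qed.

End S.

Theorem lemma13 (m n : nat) (phi : cnf3 m n) :
  satisfiable phi <-> vc (@adj m n phi) <= 14 * m + 3 * n.
Proof.
split; last exact: backward.
by case=> a H; apply: (@forward m n phi a H).
Qed.
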